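(* The category $\mathbf{T_D Top}$ of $T_D$-spaces and continuous maps is a full coreflective subcategory of the category $\mathbf{Top_{LC}}$ of topological spaces and locally closed maps. For each space $X$, the coreflection is the inclusion $X_D\subseteq X$, where $X_D$ is the subspace of locally closed points of $X$: for every $T_D$-space $Y$ and locally closed map $f:Y\to X$ there is a unique locally closed (continuous) map $\widehat f:Y\to X_D$ whose composite with the inclusion is $f$.
   Context: A point $x$ of a space $X$ is locally closed if $\{x\}$ is closed in some open neighborhood of $x$. $X$ is a $T_D$-space if every point is locally closed. A continuous map is locally closed if it maps locally closed points to locally closed points (every continuous map between $T_D$-spaces is locally closed). *)

(* Defs.v *)
From HB Require Import structures.
From mathcomp Require Import all_boot all_classical all_reals all_analysis.
Set Implicit Arguments. Unset Strict Implicit. Unset Printing Implicit Defensive.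
Local Open Scope classical_set_scope.

(* x is locally closed: {x} is closed in some open neighbourhood U of x,
   i.e. {x} = U ∩ C for some closed C of X (subspace topology on U). *)
Definition lc_point (X : topologicalType) (x : X) : Prop :=
  exists U : set X, [/\ open U, U x &
    exists C : set X, closed C /\ [set x] = U `&` C].

Definition TD_space (X : topologicalType) : Prop := forall x : X, lc_point x.

Definition lc_map (X Y : topologicalType) (f : X -> Y) : Prop :=
  forall x : X, lc_point x -> lc_point (f x).

Definition lc_points (X : topologicalType) : set X := [set x | lc_point x].

Definition XD (X : topologicalType) : topologicalType :=
  initial_topology (@set_val X (@lc_points X)).

Definition XD_incl (X : topologicalType) : XD X -> X := @set_val X (@lc_points X).
Arguments lc_points : clear implicits.
Arguments XD_incl : clear implicits.

(* Main.v *)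
Require Import Defs.
From HB Require Import structures.
From mathcomp Require Import all_boot all_classical all_reals all_analysis.
Local Open Scope classical_set_scope.

Lemma incl_cont (X : topologicalType) : continuous (XD_incl X).
Proof. exact: (@initial_continuous _ X (@set_val X (lc_points X))). Qed.

Lemma XD_TD (X : topologicalType) : TD_space (XD X).
Proof.
move=> x.
have : lc_point (XD_incl X x).
  by have := set_valP x; rewrite /lc_points /=.
move=> [U [oU Ux [C [cC E]]]].
exists (XD_incl X @^-1` U); split.
- by move: oU; apply: (proj1 (continuousP _) (incl_cont X)).
- exact: Ux.
exists (XD_incl X @^-1` C); split.
- by apply: preimage_closed => // z _; apply: incl_cont.
apply/seteqP; split => y /=.
  move=> ->; have : [set XD_incl X x] (XD_incl X x) by [].
  by rewrite E; case.
move=> [Uy Cy]; have : [set XD_incl X x] (XD_incl X y) by rewrite E.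
move=> yx; exact: (val_inj yx).
Qed.

Theorem theorem5p21 :
  (* fullness: every continuous map between T_D-spaces is locally closed *)
  (forall (Y Z : topologicalType) (f : Y -> Z),
      TD_space Y -> TD_space Z -> continuous f -> lc_map f) /\
  (* coreflection: X_D ⊆ X *)
  (forall X : topologicalType,
     [/\ TD_space (XD X), continuous (XD_incl X), lc_map (XD_incl X) &
      forall (Y : topologicalType), TD_space Y ->
      forall f : Y -> X, continuous f -> lc_map f ->
      exists! g : Y -> XD X,
        [/\ continuous g, lc_map g & XD_incl X \o g = f]]).
Proof.
split.
  by move=> Y Z f _ TZ _ x _; apply: TZ.
move=> X; split.
- exact: XD_TD.
- exact: incl_cont.
- by move=> x _; have := set_valP x; rewrite /lc_points /=.
move=> Y TY f cf lf.
have H : forall y, f y \in lc_points X by move=> y; apply: mem_set; apply: lf; apply: TY.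
pose g : Y -> XD X := fun y => exist _ (f y) (H y).
exists g; split.
  split.
  - apply: continuous_comp_initial; exact: cf.
  - by move=> y _; apply: XD_TD.
  - by [].
move=> h [_ _ hf]; apply: funext => y; apply: val_inj.
by have := congr1 (fun k => k y) hf.
Qed.
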